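(* Let $n\ge1$, let $\alpha_0,\ldots,\alpha_{2n+1}\in\mathbb{C}$ with $\sum_{i=0}^{2n+1}\alpha_i=1$, and assume \[ \alpha_{2i}^{2j-1}\notin\mathbb{Z},\quad \sum_{i=0}^n\alpha_{2i+1}\notin\mathbb{Z},\quad \alpha_{2i-1}^{2j-1}\notin\mathbb{Z}\qquad(i=1,\ldots,n,\ j=1,\ldots,n-i+1). \] Suppose $\mathbf{x}={}^t(x_0,\ldots,x_n)$ satisfies \[ \frac{d\mathbf{x}}{dt}=\Big(\frac{A_0}{t}+\frac{A_1}{1-t}\Big)\mathbf{x},\qquad A_0=\sum_{i=0}^{n-1}\big(-\alpha_{2i+2}^{2n-2i-1}\big)E_{i,i}+\sum_{i=0}^{n-1}\sum_{j=i+1}^{n}\alpha_{2j+1}E_{i,j},\quad A_1=\sum_{i=0}^{n}\sum_{j=0}^{n}\alpha_{2j+1}E_{i,j}. \] Then for each $i=0,\ldots,n$, the component $x=x_i$ satisfies the generalized hypergeometric equation \[ \big[\delta(\delta+b_1-1)\cdots(\delta+b_n-1)-t(\delta+a_0)(\delta+a_1)\cdots(\delta+a_n)\big]x=0,\qquad \delta=t\frac{d}{dt}, \] with $a_0=\alpha_1^{2n}$; $a_j=1+\alpha_{2n-2j+3}^{2j-2}$, $b_j=1+\alpha_{2n-2j+2}^{2j-1}$ for $j=1,\ldots,n-i$; and $a_j=\alpha_{2n-2j+3}^{2j-2}$, $b_j=\alpha_{2n-2j+2}^{2j-1}$ for $j=n-i+1,\ldots,n$.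
   Context: Indices of the parameters $\alpha_i$ are taken modulo $2n+2$. For integers $k,l$, $\alpha_k^l=0$ if $l<0$ and $\alpha_k^l=\sum_{i=k}^{k+l}\alpha_i$ if $l\ge0$. $E_{i,j}=(\delta_{i,k}\delta_{j,l})_{k,l=0}^{n}$ is the $(n+1)\times(n+1)$ matrix unit. *)

(* Defs.v *)
From HB Require Import structures.
From mathcomp Require Import all_boot all_order all_algebra.
From mathcomp Require Import all_classical all_reals all_analysis.
From mathcomp Require Import complex.
Set Implicit Arguments. Unset Strict Implicit. Unset Printing Implicit Defensive.
Import Order.TTheory GRing.Theory Num.Theory.
Import numFieldNormedType.Exports.
Local Open Scope ring_scope.

Definition Cplx (R : realType) : numClosedFieldType := R[i].

Definition is_intC (C : numClosedFieldType) (z : C) : Prop :=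
  exists m : int, z = m%:~R.

(* alpha : indexed by 'I_(2n+2); indices are taken modulo 2n+2. *)
Definition alph (C : numClosedFieldType) (n : nat) (al : 'I_(n.*2.+2) -> C)
  (k : nat) : C := al (inord (k %% n.*2.+2)).

(* alpha_k^l = sum_{i=k}^{k+l} alpha_i  (l >= 0; all the l used below are
   nonnegative). *)
Definition asum (C : numClosedFieldType) (n : nat) (al : 'I_(n.*2.+2) -> C)
  (k l : nat) : C := \sum_(k <= i < k + l + 1) alph al i.

Definition matA0 (C : numClosedFieldType) (n : nat) (al : 'I_(n.*2.+2) -> C)
  : 'M[C]_(n.+1) :=
  \matrix_(i < n.+1, j < n.+1)
    ((if (i == j) && (i < n)%N then - asum al (i.*2 + 2) (n.*2 - i.*2 - 1)
      else 0)
     + (if (i < n)%N && (i < j)%N then alph al (j.*2 + 1) else 0)).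

Definition matA1 (C : numClosedFieldType) (n : nat) (al : 'I_(n.*2.+2) -> C)
  : 'M[C]_(n.+1) :=
  \matrix_(i < n.+1, j < n.+1) alph al (j.*2 + 1).

Definition delta_plus (C : numClosedFieldType) (c : C) (f : C -> C) : C -> C :=
  fun t => t * derive1 f t + c * f t.

Definition delta_prod (C : numClosedFieldType) (cs : seq C) (f : C -> C)
  : C -> C := foldr (@delta_plus C) f cs.

Definition hyp_a (C : numClosedFieldType) (n : nat) (al : 'I_(n.*2.+2) -> C)
  (i j : nat) : C :=
  if j == 0%N then asum al 1 n.*2
  else if (j <= n - i)%N then 1 + asum al (n.*2 - j.*2 + 3) (j.*2 - 2)
  else asum al (n.*2 - j.*2 + 3) (j.*2 - 2).

Definition hyp_b (C : numClosedFieldType) (n : nat) (al : 'I_(n.*2.+2) -> C)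
  (i j : nat) : C :=
  if (j <= n - i)%N then 1 + asum al (n.*2 - j.*2 + 2) (j.*2 - 1)
  else asum al (n.*2 - j.*2 + 2) (j.*2 - 1).

Definition hyp_op (C : numClosedFieldType) (n : nat) (al : 'I_(n.*2.+2) -> C)
  (i : nat) (x : C -> C) (t : C) : C :=
  delta_prod (0 :: [seq hyp_b al i j - 1 | j <- iota 1 n]) x t
  - t * delta_prod [seq hyp_a al i j | j <- iota 0 n.+1] x t.

(* Main.v *)
Require Import Defs.
From HB Require Import structures.
From mathcomp Require Import all_boot all_order all_algebra.
From mathcomp Require Import all_classical all_reals all_analysis.
From mathcomp Require Import complex.
From mathcomp Require Import ring zify.
Import Order.TTheory GRing.Theory Num.Theory.
Import numFieldNormedType.Exports.
Local Open Scope ring_scope.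

Set Implicit Arguments. Unset Strict Implicit.
Section Good.
Variable R : realType.
Local Notation C := (Cplx R).
Variables (U : set C) (hU : open U) (I : Type) (x : I -> C -> C).

Inductive G : (C -> C) -> Prop :=
| Gx k : G (x k)
| Gc (c : C) : G (fun _ => c)
| Gid : G (fun t => t)
| Ginv f : G f -> (forall t, U t -> f t != 0) -> G (fun t => (f t)^-1)
| Gadd f g : G f -> G g -> G (fun t => f t + g t)
| Gmul f g : G f -> G g -> G (fun t => f t * g t)
| Gext f g : G f -> (forall t, U t -> f t = g t) -> G g.

Arguments Gext [f g].
Arguments Ginv [f].
Arguments Gadd [f g].
Arguments Gmul [f g].
Hypothesis hxd : forall k t, U t -> derivable (x k) t 1.
Hypothesis hxG : forall k, G (derive1 (x k)).

Lemma nearU (f g : C -> C) t : U t -> (forall s, U s -> f s = g s) -> {near t, f =1 g}.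
Proof.
move=> Ut fg; have : nbhs t U by apply: open_nbhs_nbhs; split.
by apply: filterS => s /fg.
Qed.

Lemma Gder f : G f -> (forall t, U t -> derivable f t 1) /\ G (derive1 f).
Proof.
elim=> {f}.
- by move=> k; split; [exact: hxd|exact: hxG].
- move=> c; split=> [t _|]; first exact: derivable_cst.
  apply: (Gext (Gc 0)) => t _; by rewrite derive1E derive_cst.
- split=> [t _|]; first exact: derivable_id.
  apply: (Gext (Gc 1)) => t _; by rewrite derive1E derive_id.
- move=> f Gf [df Gf'] nz; split=> [t Ut|].
    exact: derivableV (nz t Ut) (df t Ut).
  apply: (Gext (f := fun t => - ((f t)^-1 * (f t)^-1) * derive1 f t)).
    apply: Gmul; last exact: Gf'.
    apply: (Gext (f := fun t => (-1) * ((f t)^-1 * (f t)^-1))); last by move=> *; rewrite mulN1r.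
    by apply: Gmul; [exact: Gc | apply: Gmul; apply: Ginv].
  move=> t Ut; rewrite [RHS]derive1E (deriveV (nz t Ut) (df t Ut)) -derive1E. have sc : forall a b : C, a *: b = a * b by []. rewrite sc. congr (- _ * _). by rewrite invfM.
- move=> f g Gf [df Gf'] Gg [dg Gg']; split=> [t Ut|].
    exact: (derivableD (df t Ut) (dg t Ut)).
  apply: (Gext (Gadd Gf' Gg')) => t Ut.
  rewrite [RHS]derive1E (_ : (fun t => f t + g t) = (f + g)) //.
  by rewrite (deriveD (df t Ut) (dg t Ut)) -!derive1E.
- move=> f g Gf [df Gf'] Gg [dg Gg']; split=> [t Ut|].
    exact: (derivableM (df t Ut) (dg t Ut)).
  apply: (Gext (Gadd (Gmul Gf Gg') (Gmul Gg Gf'))) => t Ut.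
  rewrite [RHS]derive1E (_ : (fun t => f t * g t) = (f * g)) //.
  by rewrite (deriveM (df t Ut) (dg t Ut)) -!derive1E.
- move=> f g Gf [df Gf'] fg; split=> [t Ut|].
    move: (df t Ut); apply: near_eq_derivable; exact: nearU.
  apply: (Gext Gf') => t Ut; rewrite !derive1E; apply: near_eq_derive.
  have := @nearU f g t Ut fg; apply: filterS => s; done.
Qed.

Definition EqU (f g : C -> C) := forall t, U t -> f t = g t.

Lemma nearU' (f g : C -> C) t : U t -> EqU f g -> \forall s \near t, f s = g s.
Proof. move=> Ut fg; have := @nearU f g t Ut fg; apply: filterS => s; done. Qed.

Lemma Gdp c f : G f -> G (delta_plus c f).
Proof.
move=> Gf; rewrite /delta_plus; apply: Gadd; apply: Gmul.
- exact: Gid.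
- exact: (Gder Gf).2.
- exact: Gc.
- exact: Gf.
Qed.

Lemma GP s f : G f -> G (delta_prod s f).
Proof. by move=> Gf; elim: s => //= a s IH; apply: Gdp. Qed.

Lemma d1cong f g t : U t -> EqU f g -> derive1 f t = derive1 g t.
Proof. by move=> Ut fg; rewrite !derive1E; apply: near_eq_derive; apply: nearU'. Qed.

Lemma Dcong c f g : EqU f g -> EqU (delta_plus c f) (delta_plus c g).
Proof. by move=> fg t Ut; rewrite /delta_plus (d1cong Ut fg) fg. Qed.

Lemma Pcong s f g : EqU f g -> EqU (delta_prod s f) (delta_prod s g).
Proof. by move=> fg; elim: s => //= a s IH; apply: Dcong. Qed.

Lemma dD f g t : G f -> G g -> U t ->
  derive1 (fun t => f t + g t) t = derive1 f t + derive1 g t.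
Proof.
move=> Gf Gg Ut; have df := (Gder Gf).1 t Ut; have dg := (Gder Gg).1 t Ut.
rewrite [LHS]derive1E (_ : (fun t => f t + g t) = (f + g)) //.
by rewrite (deriveD df dg) -!derive1E.
Qed.

Lemma dM f g t : G f -> G g -> U t ->
  derive1 (fun t => f t * g t) t = f t * derive1 g t + g t * derive1 f t.
Proof.
move=> Gf Gg Ut; have df := (Gder Gf).1 t Ut; have dg := (Gder Gg).1 t Ut.
rewrite [LHS]derive1E (_ : (fun t => f t * g t) = (f * g)) //.
by rewrite (deriveM df dg) -!derive1E.
Qed.

Lemma dId t : derive1 (fun t : C => t) t = 1.
Proof. by rewrite derive1E derive_id. Qed.

Lemma dCst (c : C) t : derive1 (fun _ : C => c) t = 0.
Proof. by rewrite derive1E derive_cst. Qed.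

Lemma dDp_alg (b t f f1 f2 : C) :
  t * f2 + f1 * 1 + (b * f1 + f * 0) = f1 + t * f2 + b * f1.
Proof. ring. Qed.

Lemma dDp b f t : G f -> U t ->
  derive1 (delta_plus b f) t = derive1 f t + t * derive1 (derive1 f) t + b * derive1 f t.
Proof.
move=> Gf Ut; have Gf' := (Gder Gf).2.
rewrite /delta_plus dD //; last 2 first.
- by apply: Gmul => //; exact: Gid.
- by apply: Gmul => //; exact: Gc.
rewrite !dM //; try exact: Gid; try exact: Gc.
rewrite dId dCst; exact: dDp_alg.
Qed.

Lemma swap1_alg (a b t f f1 f2 : C) :
 t * (f1 + t * f2 + b * f1) + a * (t * f1 + b * f) = t * (f1 + t * f2 + a * f1) + b * (t * f1 + a * f).
Proof. ring. Qed.

Lemma swap1 a b f : G f -> EqU (delta_plus a (delta_plus b f)) (delta_plus b (delta_plus a f)).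
Proof.
move=> Gf t Ut; rewrite {1}/delta_plus dDp // [in RHS]/delta_plus dDp //.
rewrite /delta_plus; exact: swap1_alg.
Qed.

Lemma swapP s c f : G f -> EqU (delta_prod s (delta_plus c f)) (delta_plus c (delta_prod s f)).
Proof.
move=> Gf; elim: s => [|a s IH] t Ut //=.
rewrite (Dcong a IH Ut); apply: swap1 => //; exact: GP.
Qed.

Lemma comm2 s1 s2 f : G f -> EqU (delta_prod s1 (delta_prod s2 f)) (delta_prod s2 (delta_prod s1 f)).
Proof.
move=> Gf; elim: s2 => [|a s2 IH] t Ut //=.
rewrite (swapP _ _ (GP _ Gf) Ut); exact: (Dcong a IH Ut).
Qed.

Lemma shift1_alg (a t g g1 : C) :
  t * (t * g1 + g * 1) + a * (t * g) = t * (t * g1 + (a + 1) * g).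
Proof. ring. Qed.

Lemma shift1 a g : G g -> EqU (delta_plus a (fun t => t * g t)) (fun t => t * delta_plus (a + 1) g t).
Proof.
move=> Gg t Ut; rewrite /delta_plus dM //; last exact: Gid.
rewrite dId; exact: shift1_alg.
Qed.

Lemma shiftP s f : G f -> EqU (delta_prod s (fun t => t * f t))
  (fun t => t * delta_prod [seq c + 1 | c <- s] f t).
Proof.
move=> Gf; elim: s => [|a s IH] t Ut //=.
rewrite (Dcong a IH Ut); apply: shift1 => //; exact: GP.
Qed.
End Good.

Section Main.
Variables (R : realType) (n : nat) (al : 'I_(n.*2.+2) -> Cplx R) (U : set (Cplx R))
  (x : 'I_n.+1 -> Cplx R -> Cplx R).
Local Notation C := (Cplx R).
Hypotheses (hn : (1 <= n)%N) (hU : open U) (U0 : ~ U 0) (U1 : ~ U 1)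
 (hode : forall t, U t -> forall k : 'I_n.+1, derivable (x k) t 1 /\ derive1 (x k) t =
       \sum_(l < n.+1) ((matA0 al k l / t + matA1 al k l / (1 - t)) * x l t)).

Lemma tn0 t : U t -> t != 0.
Proof. by move=> Ut; apply/eqP => t0; apply: U0; rewrite -t0. Qed.
Lemma t1n0 t : U t -> 1 - t != 0.
Proof. by move=> Ut; rewrite subr_eq0; apply/eqP => t0; apply: U1; rewrite t0. Qed.

Lemma hxd k t : U t -> derivable (x k) t 1.
Proof. by move=> Ut; case: (hode Ut k). Qed.

Local Notation GG := (G U x).

Lemma Gsum (F : 'I_n.+1 -> C -> C) : (forall l, GG (F l)) -> GG (fun t => \sum_(l < n.+1) F l t).
Proof.
move=> GF; have: forall r : seq 'I_n.+1, GG (fun t => \sum_(l <- r) F l t).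
  elim=> [|a r IH].
    by apply: (@Gext _ U _ x (fun _ => 0)); [exact: Gc | move=> t _; rewrite big_nil].
  by apply: (Gext (Gadd (GF a) IH)) => t _; rewrite big_cons.
by move/(_ (index_enum _)).
Qed.

Lemma G1t : GG (fun t => 1 - t).
Proof.
apply: (@Gext _ U _ x (fun t => 1 + (-1) * t)); last by move=> t _; rewrite mulN1r.
by apply: Gadd; [exact: Gc| apply: Gmul; [exact: Gc| exact: Gid]].
Qed.

Lemma hxG k : GG (derive1 (x k)).
Proof.
apply: (@Gext _ U _ x (fun t => \sum_(l < n.+1) ((matA0 al k l / t + matA1 al k l / (1 - t)) * x l t))).
- apply: Gsum => l; apply: Gmul; last exact: Gx.
  apply: Gadd; apply: Gmul; try exact: Gc.
  + by apply: Ginv; [exact: Gid| exact: tn0].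
  + by apply: Ginv; [exact: G1t| exact: t1n0].
- by move=> t Ut; rewrite (hode Ut k).2.
Qed.


Definition cc (l : nat) : C := alph al (l.*2 + 1).
Definition X (m : nat) : C -> C := x (inord m).
Definition dd (i : nat) : C := asum al (i.*2 + 2) (n.*2 - i.*2 - 1).
Definition Tail (i : nat) (t : C) : C := \sum_(l < n.+1 | (i < l)%N) cc l * x l t.
Definition Ssum (t : C) : C := \sum_(l < n.+1) cc l * x l t.

Lemma row_alg (a b t y : C) : t != 0 -> 1 - t != 0 ->
  t * ((a / t + b / (1 - t)) * y) = a * y + t / (1 - t) * (b * y).
Proof.
move=> t0 t1; rewrite mulrA mulrDr (mulrC t (a / t)) divfK // mulrDl; congr (_ + _).
by rewrite -!mulrA; congr (_ * _); rewrite mulrCA.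
Qed.

Lemma row i t : (i <= n)%N -> U t -> t * derive1 (X i) t =
  (if (i < n)%N then - dd i * X i t else 0) + Tail i t + t / (1 - t) * Ssum t.
Proof.
move=> hi Ut; rewrite /X (hode Ut (inord i)).2 mulr_sumr.
under eq_bigr => l _ do rewrite (row_alg _ _ _ (tn0 Ut) (t1n0 Ut)).
rewrite big_split /= -mulr_sumr; congr (_ + _); last first.
  by congr (_ * _); apply: eq_bigr => l _; rewrite /matA1 mxE.
rewrite (eq_bigr (fun l : 'I_n.+1 => (if (inord i == l) && (i < n)%N then - dd i else 0) * x l t
   + (if (i < l)%N then cc l else 0) * x l t)); last first.
  move=> l _; rewrite /matA0 mxE inordK // -mulrDl; congr (_ * _); congr (_ + _).
  have -> : ((i < n) && (i < l))%N = (i < l)%N.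
    by have := ltn_ord l; case: (ltnP i l); rewrite ?andbT ?andbF //; lia.
  by [].
rewrite big_split /=; congr (_ + _); last first.
  by rewrite /Tail [RHS]big_mkcond; apply: eq_bigr => l _; case: ifP; rewrite ?mul0r.
case: ltnP => hin.
- rewrite (bigD1 (inord i)) //= eqxx big1 ?addr0 //.
  by move=> l /negbTE; rewrite eq_sym => ->; rewrite mul0r.
- by rewrite big1 // => l _; rewrite andbF mul0r.
Qed.


Lemma tsplit m t : (m <= n)%N ->
  \sum_(l < n.+1 | (m <= l)%N) cc l * x l t = cc m * X m t + Tail m t.
Proof.
move=> hm; rewrite (bigD1 (inord m)) /=; last by rewrite inordK.
rewrite /X inordK //; congr (_ + _); apply: eq_bigl => l.
by rewrite -(inj_eq val_inj) /= inordK // ltn_neqAle eq_sym andbC.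
Qed.

Lemma TailS i t : (i < n)%N -> Tail i t = cc i.+1 * X i.+1 t + Tail i.+1 t.
Proof. by move=> hi; exact: tsplit. Qed.

Lemma Tailn t : Tail n t = 0.
Proof. by rewrite /Tail big1 // => l hl; exfalso; have := ltn_ord l; lia. Qed.

Lemma Ssum0 t : Ssum t = cc 0 * X 0 t + Tail 0 t.
Proof. by rewrite /Ssum -(tsplit _ (leq0n n)). Qed.

Definition Bf (j : nat) : C := asum al (n.*2 - j.*2 + 2) (j.*2 - 1).
Definition Af (j : nat) : C := asum al (n.*2 - j.*2 + 3) (j.*2 - 2).
Definition e0 : C := asum al 1 n.*2.

Lemma BfE j : (1 <= j <= n)%N -> Bf j = dd (n - j).
Proof.
move=> /andP[j1 jn]; rewrite /Bf /dd; congr asum; rewrite -!muln2; lia.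
Qed.

Lemma AfE j : (1 <= j <= n)%N -> Af j = asum al ((n - j).+1.*2 + 1) (n.*2 - (n - j).+1.*2).
Proof.
move=> /andP[j1 jn]; rewrite /Af; congr asum; rewrite -!muln2; lia.
Qed.

Lemma esplit i : (i < n)%N -> asum al (i.*2 + 1) (n.*2 - i.*2) = cc i + dd i.
Proof.
move=> hi; rewrite /asum /dd /asum big_ltn; last by rewrite -!muln2; lia.
congr (_ + _).
have -> : (i.*2 + 1 + (n.*2 - i.*2) + 1 = i.*2 + 2 + (n.*2 - i.*2 - 1) + 1)%N.
  by rewrite -!muln2; lia.
by have -> : ((i.*2 + 1).+1 = i.*2 + 2)%N by rewrite -!muln2; lia.
Qed.

Lemma elast : asum al (n.*2 + 1) (n.*2 - n.*2) = cc n.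
Proof.
rewrite /asum subnn addn0 (_ : (n.*2 + 1 + 1 = (n.*2 + 1).+1)%N); last by rewrite addn1.
by rewrite big_nat1.
Qed.

Lemma e0E : e0 = cc 0 + dd 0.
Proof. by rewrite -esplit // /e0 subn0. Qed.


Local Opaque derive1 X Bf Af dd cc Tail Ssum e0.

Lemma R1 j : (1 <= j <= n)%N ->
  EqU U (delta_plus (Bf j) (X (n - j))) (delta_plus (Af j) (X (n - j).+1)).
Proof.
move=> hj t Ut; rewrite /delta_plus.
have ilt : (n - j < n)%N by move/andP: hj => [? ?]; lia.
have r1 := row (ltnW ilt) Ut; have r2 := row ilt Ut.
rewrite [X in X + _ = _]r1 [X in _ = X + _]r2.
rewrite ilt.
rewrite (BfE hj) (AfE hj).
rewrite (TailS t ilt).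
case: ltnP => h2.
- rewrite esplit //. ring.
- have e : (n - j).+1 = n by lia.
  rewrite e elast Tailn. ring.
Qed.

Lemma R2 : EqU U (delta_plus 0 (X n)) (fun t => t * delta_plus e0 (X 0) t).
Proof.
move=> t Ut; rewrite /delta_plus.
have r1 := row (leqnn n) Ut; have r2 := row (leq0n n) Ut.
rewrite [X in X + _ = _]r1 [X in _ = _ * (X + _)]r2.
rewrite ltnn hn Tailn.
rewrite e0E Ssum0; have t1 := t1n0 Ut.
move: (X 0 t) (Tail 0 t) (X n t) => a b c.
field; exact: t1.
Qed.

Lemma GX m : GG (X m). Proof. exact: Gx. Qed.
Lemma SW s c f t : GG f -> U t -> delta_prod s (delta_plus c f) t = delta_plus c (delta_prod s f) t.
Proof. move=> Gf Ut; exact: (swapP hU (@hxd) (@hxG) s c Gf Ut). Qed.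
Lemma CM s1 s2 f t : GG f -> U t -> delta_prod s1 (delta_prod s2 f) t = delta_prod s2 (delta_prod s1 f) t.
Proof. move=> Gf Ut; exact: (comm2 hU (@hxd) (@hxG) s1 s2 Gf Ut). Qed.
Lemma SH s f t : GG f -> U t -> delta_prod s (fun t => t * f t) t = t * delta_prod [seq c + 1 | c <- s] f t.
Proof. move=> Gf Ut; exact: (shiftP hU (@hxd) (@hxG) s Gf Ut). Qed.
Lemma GPm s f : GG f -> GG (delta_prod s f).
Proof. move=> Gf; exact: (GP hU (@hxd) (@hxG) s Gf). Qed.
Lemma GDm c f : GG f -> GG (delta_plus c f).
Proof. move=> Gf; exact: (Gdp hU (@hxd) (@hxG) c Gf). Qed.
Lemma PC s f g t : EqU U f g -> U t -> delta_prod s f t = delta_prod s g t.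
Proof. move=> fg Ut; exact: (Pcong hU s fg Ut). Qed.
Lemma DC c f g t : EqU U f g -> U t -> delta_plus c f t = delta_plus c g t.
Proof. move=> fg Ut; exact: (Dcong hU c fg Ut). Qed.

Lemma dp_rcons s c (f : C -> C) : delta_prod (rcons s c) f = delta_prod s (delta_plus c f).
Proof. by elim: s => //= a s ->. Qed.
Lemma dp_cat s1 s2 (f : C -> C) : delta_prod (s1 ++ s2) f = delta_prod s1 (delta_prod s2 f).
Proof. by rewrite /delta_prod foldr_cat. Qed.
Lemma iota_rcons a m : iota a m.+1 = rcons (iota a m) (a + m).
Proof. by rewrite -addn1 iotaD cats1. Qed.

Lemma C1 m : (m <= n)%N -> EqU U (delta_prod [seq Bf j | j <- iota 1 m] (X (n - m)))
  (delta_prod [seq Af j | j <- iota 1 m] (X n)).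
Proof.
elim: m => [_ t Ut|m IH hm t Ut]; first by rewrite subn0.
have hj : (1 <= m.+1 <= n)%N by rewrite hm.
rewrite !iota_rcons !map_rcons !dp_rcons ?add1n.
have e : ((n - m.+1).+1 = n - m)%N by lia.
have r := R1 hj; rewrite e in r.
apply: etrans (PC _ r Ut) _.
apply: etrans (SW _ _ (GX (n - m)) Ut) _.
apply: etrans (DC _ (IH (ltnW hm)) Ut) _.
exact: esym (SW _ _ (GX n) Ut).
Qed.

Lemma C2 k : (k <= n)%N -> EqU U (delta_prod [seq Af j | j <- iota (n - k).+1 k] (X k))
  (delta_prod [seq Bf j | j <- iota (n - k).+1 k] (X 0)).
Proof.
elim: k => [_ t Ut //|k IH hk t Ut].
have e : ((n - k.+1).+1 = n - k)%N by lia.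
rewrite e /=.
have hj : (1 <= n - k <= n)%N by apply/andP; split; lia.
have r := R1 hj.
have e2 : (n - (n - k) = k)%N by lia.
rewrite e2 in r.
apply: etrans (esym (SW _ _ (GX k.+1) Ut)) _.
apply: etrans (PC _ (fun t Ut => esym (r t Ut)) Ut) _.
apply: etrans (SW _ _ (GX k) Ut) _.
exact: (DC _ (IH (ltnW hk)) Ut).
Qed.

Local Transparent Bf Af e0.
Lemma Lb k : (k <= n)%N -> [seq hyp_b al k j - 1 | j <- iota 1 n] =
  [seq Bf j | j <- iota 1 (n - k)] ++ [seq c - 1 | c <- [seq Bf j | j <- iota (n - k).+1 k]].
Proof.
move=> hk.
have -> : iota 1 n = iota 1 (n - k) ++ iota (1 + (n - k)) k by rewrite -iotaD subnK.
rewrite map_cat -map_comp; congr (_ ++ _); apply/eq_in_map => j; rewrite mem_iota => /andP[h1 h2].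
- by rewrite /hyp_b ifT; [rewrite /Bf addrC addKr | lia].
- by rewrite /hyp_b ifF //=; lia.
Qed.

Lemma La k : (k <= n)%N -> [seq hyp_a al k j | j <- iota 0 n.+1] =
  e0 :: ([seq c + 1 | c <- [seq Af j | j <- iota 1 (n - k)]] ++ [seq Af j | j <- iota (n - k).+1 k]).
Proof.
move=> hk; rewrite /=; congr (_ :: _).
have -> : iota 1 n = iota 1 (n - k) ++ iota (1 + (n - k)) k by rewrite -iotaD subnK.
rewrite map_cat -map_comp; congr (_ ++ _); apply/eq_in_map => j; rewrite mem_iota => /andP[h1 h2].
- by rewrite /hyp_a ifF; [rewrite ifT; [rewrite /Af addrC | lia] | lia].
- by rewrite /hyp_a ifF; [rewrite ifF //; lia | lia].
Qed.

Local Opaque Bf Af e0.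
Lemma mainX k t : (k <= n)%N -> U t -> hyp_op al k (X k) t = 0.
Proof.
move=> hk Ut; rewrite /hyp_op (Lb hk) (La hk).
apply/eqP; rewrite subr_eq0; apply/eqP.
set LBk := [seq Bf j | j <- iota 1 (n - k)].
set LAk := [seq Af j | j <- iota 1 (n - k)].
set LB' := [seq Bf j | j <- iota (n - k).+1 k].
set LA' := [seq Af j | j <- iota (n - k).+1 k].
set Dm := [seq c - 1 | c <- LB'].
set E1 := [seq c + 1 | c <- LAk].
have c1 := C1 (leq_subr k n); rewrite (subKn hk) in c1.
apply: etrans (DC 0 (f := delta_prod (LBk ++ Dm) (X k)) (g := delta_prod Dm (delta_prod LAk (X n))) _ Ut) _.
  move=> s Us; rewrite dp_cat; apply: etrans (CM _ _ (GX k) Us) _; exact: (PC _ c1 Us).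
rewrite -[delta_prod Dm (delta_prod LAk (X n))]dp_cat.
apply: etrans (esym (SW _ _ (GX n) Ut)) _.
apply: etrans (PC _ R2 Ut) _.
apply: etrans (SH _ (GDm e0 (GX 0)) Ut) _.
congr (t * _).
have -> : [seq c + 1 | c <- Dm ++ LAk] = LB' ++ E1.
  rewrite map_cat; congr (_ ++ _).
  rewrite /Dm -map_comp (@eq_map _ _ _ id); first by rewrite map_id.
  by move=> c /=; rewrite subrK.
rewrite dp_cat.
apply: etrans (CM _ _ (GDm e0 (GX 0)) Ut) _.
apply: etrans (PC _ (fun s Us => SW _ _ (GX 0) Us) Ut) _.
apply: etrans (PC _ (fun s Us => DC e0 (fun s' Us' => esym (C2 hk Us')) Us) Ut) _.
apply: etrans (SW _ _ (GPm _ (GX k)) Ut) _.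
exact: (congr1 (fun f => delta_plus e0 f t) (esym (dp_cat E1 LA' (X k)))).
Qed.

Local Transparent X.
Lemma mainx (k : 'I_n.+1) t : U t -> hyp_op al k (x k) t = 0.
Proof.
move=> Ut; have hk : (k <= n)%N by rewrite -ltnS.
by have := mainX hk Ut; rewrite /X inord_val.
Qed.

End Main.

Unset Implicit Arguments.

Theorem corollary3p2 (R : realType) (n : nat) (al : 'I_(n.*2.+2) -> Cplx R)
  (U : set (Cplx R)) (x : 'I_n.+1 -> Cplx R -> Cplx R) :
  (1 <= n)%N ->
  \sum_(k < n.*2.+2) al k = 1 ->
  (forall i j : nat, (1 <= i <= n)%N -> (1 <= j <= n - i + 1)%N ->
     ~ is_intC (asum al i.*2 (j.*2 - 1))) ->
  ~ is_intC (\sum_(0 <= k < n.+1) alph al (k.*2 + 1)) ->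
  (forall i j : nat, (1 <= i <= n)%N -> (1 <= j <= n - i + 1)%N ->
     ~ is_intC (asum al (i.*2 - 1) (j.*2 - 1))) ->
  open U -> ~ U 0 -> ~ U 1 ->
  (forall t, U t -> forall k : 'I_n.+1,
     derivable (x k) t 1 /\
     derive1 (x k) t =
       \sum_(l < n.+1) ((matA0 al k l / t + matA1 al k l / (1 - t)) * x l t)) ->
  forall (k : 'I_n.+1) t, U t -> hyp_op al k (x k) t = 0.
Proof.
move=> hn _ _ _ _ hU U0 U1 hode k t Ut.
exact: (mainx hn hU U0 U1 hode k Ut).
Qed.
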